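(* For every positive integer $n$, \[ \sum_{\pi \in \mathcal{D}(n)} (-1)^{\#(\pi)-1} s(\pi)^2 = 2\sigma(n) - d(n) + 2p^{(2)}(n). \]
   Context: $\mathcal{D}(n)$ is the set of partitions of $n$ into distinct parts; for a partition $\pi$, $s(\pi)$ is its smallest part and $\#(\pi)$ its number of parts. $\sigma(n)=\sum_{d\mid n} d$, $d(n)$ is the number of positive divisors of $n$, and $p^{(2)}(n)$ is the number of partitions of $n$ having exactly two distinct part sizes. *)

(* Defs.v *)
From mathcomp Require Import all_boot all_order all_algebra.
Set Implicit Arguments. Unset Strict Implicit. Unset Printing Implicit Defensive.
Import GRing.Theory Num.Theory.

(* A partition of n into distinct parts is encoded as its set of parts:
   A : {set 'I_n}, where the element i : 'I_n stands for the part i+1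
   (every part of a partition of n lies in 1..n). *)
Definition part (n : nat) (i : 'I_n) : nat := i.+1.

Definition is_distinct_partition (n : nat) (A : {set 'I_n}) : bool :=
  (\sum_(i in A) part i == n)%N.

Definition nparts (n : nat) (A : {set 'I_n}) : nat := #|A|.

Definition spart (n : nat) (A : {set 'I_n}) : nat :=
  \big[minn/n.+1]_(i in A) part i.

Definition sigma (n : nat) : nat := \sum_(d <- divisors n) d.
Definition ndiv (n : nat) : nat := size (divisors n).

(* A general partition of n is encoded by its multiplicity function:
   f i = number of times part i+1 occurs (at most n). *)
Definition is_partition (n : nat) (f : {ffun 'I_n -> 'I_n.+1}) : bool :=
  (\sum_(i : 'I_n) part i * f i == n)%N.

Definition nsizes (n : nat) (f : {ffun 'I_n -> 'I_n.+1}) : nat :=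
  #|[set i | nat_of_ord (f i) != 0%N]|.

Definition p2 (n : nat) : nat :=
  #|[set f : {ffun 'I_n -> 'I_n.+1} | is_partition f && (nsizes f == 2%N)]|.

(* Main.v *)
Require Import Defs.
From mathcomp Require Import all_boot all_order all_algebra.
Import GRing.Theory Num.Theory.
Local Open Scope ring_scope.
From mathcomp Require Import ring zify.


Section Main.
Variable n : nat.
Local Notation P := {poly int}.
Local Notation B := {poly {poly int}}.

Definition eqm (p r : P) := exists e : P, p - r = 'X^(n.+1) * e.

Lemma eqm_refl p : eqm p p.
Proof. by exists 0; rewrite subrr mulr0. Qed.
Lemma eqm_sym p r : eqm p r -> eqm r p.
Proof. by case=> e E; exists (- e); rewrite mulrN -E opprB. Qed.
Lemma eqm_trans p r s : eqm p r -> eqm r s -> eqm p s.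
Proof. case=> e E [f F]; exists (e + f). by rewrite mulrDr -E -F addrA subrK. Qed.
Lemma eqmD p r p' r' : eqm p r -> eqm p' r' -> eqm (p + p') (r + r').
Proof. case=> e E [f F]; exists (e + f).
have -> : p + p' - (r + r') = (p - r) + (p' - r') by ring.
by rewrite E F mulrDr. Qed.
Lemma eqmN p r : eqm p r -> eqm (- p) (- r).
Proof. case=> e E; exists (- e). rewrite mulrN -E; ring. Qed.
Lemma eqmM p r p' r' : eqm p r -> eqm p' r' -> eqm (p * p') (r * r').
Proof. case=> e E [f F]; exists (p * f + e * r').
have -> : p * p' - (r * r') = p * (p' - r') + (p - r) * r' by ring.
rewrite E F; ring. Qed.
Arguments eqm_trans {p r s}. Arguments eqm_sym {p r}. Arguments eqmD {p r p' r'}.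
Arguments eqmN {p r}. Arguments eqmM {p r p' r'}.
Lemma eqm0 e : eqm ('X^(n.+1) * e) 0.
Proof. by exists e; rewrite subr0. Qed.

Lemma eqm_prod (I : Type) (s : seq I) (F G : I -> P) :
  (forall i, eqm (F i) (G i)) -> eqm (\prod_(i <- s) F i) (\prod_(i <- s) G i).
Proof.
move=> H; elim: s => [|a s IH]; first by rewrite !big_nil; exact: eqm_refl.
by rewrite !big_cons; apply: eqmM.
Qed.

Lemma eqm_coef p r : eqm p r -> p`_n = r`_n.
Proof.
case=> e E; apply/eqP; rewrite -subr_eq0 -coefB E coefXnM ltnSn //.
Qed.


Definition Ft (t : nat) (i : 'I_n) : P := if (t <= i)%N then - 'X^(i.+1) else 0.
Definition Rt (t : nat) : P := \prod_(i : 'I_n) (Ft t i + 1).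
Definition ht (t : nat) : P := 'X^t * Rt t.
Definition Sk (k : nat) : B := \poly_(t < n.+1) (ht t * 'X^(k * t)).
Definition Qk (k : nat) : B := \prod_(j < k) (1 - ('X^(j.+1))%:P * 'X).

Lemma Rt_n : Rt n = 1.
Proof. by apply: big1 => i _; rewrite /Ft leqNgt ltn_ord add0r. Qed.

Lemma ht_n : ht n = 'X^n.
Proof. by rewrite /ht Rt_n mulr1. Qed.

Lemma Rt_rec t : (0 < t <= n)%N -> Rt t.-1 = (1 - 'X^t) * Rt t.
Proof.
case/andP=> t0 tn.
have lt : (t.-1 < n)%N by lia.
rewrite /Rt (bigD1 (Ordinal lt)) //= [in RHS](bigD1 (Ordinal lt)) //=.
rewrite /Ft /= leqnn prednK //.
have -> : (t <= t.-1)%N = false by lia.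
rewrite add0r mul1r addrC.
congr (_ * _); apply: eq_bigr => i /eqP ne.
have ne' : (nat_of_ord i != t.-1) by apply/eqP => e; apply: ne; apply: val_inj.
congr (_ + 1); congr (if _ then _ else _).
move: ne'; lia.
Qed.

Lemma ht_rec t : (0 < t <= n)%N -> 'X * ht t.-1 = (1 - 'X^t) * ht t.
Proof.
move=> Ht; have Et : ('X^t : P) = 'X * 'X^(t.-1).
  by rewrite -exprS prednK //; case/andP: Ht.
rewrite /ht (Rt_rec _ Ht) Et; ring.
Qed.

Lemma Sk_step k : Sk k.+1 = (1 - ('X^(k.+1))%:P * 'X) * Sk k
   + ('X^(k.+1 * n.+1))%:P * 'X^(n.+1).
Proof.
apply/polyP => i.
rewrite mulrBl mul1r -mulrA coefD coefB coefCM coefXM coefCM coefXn /Sk !coef_poly.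
case: i => [|i] /=.
  by rewrite !muln0 !mulr0 subr0 addr0.
case: (ltngtP i n) => [lt|gt|->].
- have -> : (i.+1 < n.+1)%N by lia.
  have -> : (i < n.+1)%N by lia.
  have -> : (i.+1 == n.+1) = false by lia.
  rewrite mulr0 addr0.
  have H1 : (0 < i.+1 <= n)%N by lia.
  have := ht_rec _ H1 => /= E.
  have -> : ('X^(k.+1) : P) = 'X * 'X^k by rewrite exprS.
  rewrite mulrA -(mulrA 'X) (mulrC 'X^k) mulrA E.
  have -> : (k.+1 * i.+1 = i.+1 + k * i.+1)%N by lia.
  have -> : (k * i.+1 = k + k * i)%N by lia.
  rewrite !exprD; ring.
- have -> : (i.+1 < n.+1)%N = false by lia.
  have -> : (i < n.+1)%N = false by lia.
  have -> : (i.+1 == n.+1) = false by lia.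
  by rewrite !mulr0 !subr0 addr0.
- rewrite ltnn ltnSn eqxx mulr1 ht_n sub0r.
  rewrite -!exprD.
  have -> : (k.+1 + (n + k * n) = k.+1 * n.+1)%N by lia.
  by rewrite addNr.
Qed.


Definition eqmB (u v : B) := exists E : B, u - v = ('X^(n.+1))%:P * E.

Lemma eqmB_trans u v w : eqmB u v -> eqmB v w -> eqmB u w.
Proof. case=> e E [f F]; exists (e + f). by rewrite mulrDr -E -F addrA subrK. Qed.

Lemma eqmB_deriv u v : eqmB u v -> eqmB u^`() v^`().
Proof. by case=> e E; exists e^`(); rewrite -derivB E derivE. Qed.

Lemma eqmB_ev u v : eqmB u v -> eqm u.[1] v.[1].
Proof. by case=> e E; exists e.[1]; rewrite -hornerN -hornerD E hornerE. Qed.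

Arguments eqmB_trans {u v w}. Arguments eqmB_deriv {u v}. Arguments eqmB_ev {u v}.
Lemma Qk_S k : eqmB (Qk k * Sk 0) (Sk k).
Proof.
elim: k => [|k [e E]].
  exists 0; rewrite /Qk big_ord0 mul1r mulr0; exact: subrr.
exists ((1 - ('X^(k.+1))%:P * 'X) * e - ('X^(k * n.+1))%:P * 'X^(n.+1)).
rewrite Sk_step /Qk big_ord_recr /= -/(Qk k).
have -> : ('X^(k.+1 * n.+1) : P) = 'X^(n.+1) * 'X^(k * n.+1).
  by rewrite -exprD mulSn.
move: E => /eqP; rewrite subr_eq => /eqP E'.
rewrite (mulrC (Qk k)) -mulrA E' polyCM; ring.
Qed.

Lemma Sn_h0 : eqmB (Sk n) ((ht 0)%:P).
Proof.
exists (\poly_(t < n.+1) (if t == 0%N then 0 else 'X^(t + n * t - n.+1) * Rt t)).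
apply/polyP => i; rewrite coefB coefCM coefC !coef_poly.
case: i => [|i] /=.
  by rewrite muln0 expr0 mulr1 subrr mulr0.
rewrite subr0; case: ifP => // lt.
rewrite /ht mulrA -exprD -(mulrC (Rt _)) -mulrA -exprD.
  rewrite mulrC; congr ('X^_ * _); lia.
by rewrite mulr0.
Qed.

Lemma eqm_eq p r : p = r -> eqm p r.
Proof. by move=> ->; apply: eqm_refl. Qed.
Arguments eqm_eq {p r}.

Lemma geom1 (x : P) m : (1 - x) * \sum_(a < m) x ^+ a.+1 = x - x ^+ m.+1.
Proof.
elim: m => [|m IH]; first by rewrite big_ord0 mulr0 expr1 subrr.
rewrite big_ord_recr /= mulrDr IH; rewrite !exprS; ring.
Qed.

Lemma geom0 (x : P) m : (1 - x) * \sum_(a < m) x ^+ a = 1 - x ^+ m.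
Proof.
elim: m => [|m IH]; first by rewrite big_ord0 mulr0 expr0 subrr.
rewrite big_ord_recr /= mulrDr IH; rewrite !exprS; ring.
Qed.

Definition cj (j : nat) : P := \sum_(a < n) ('X^j) ^+ a.+1.
Definition Ak (k : nat) : P := \sum_(j < k) cj j.+1.
Definition A2k (k : nat) : P := \sum_(j < k) cj j.+1 ^+ 2.

Lemma c_eq j : (0 < j)%N -> eqm ('X^j) ((1 - 'X^j) * cj j).
Proof.
move=> j0; rewrite /cj geom1; exists ('X^(j.-1 * n.+1)).
rewrite -exprM -exprD; have -> : (j * n.+1 = n.+1 + j.-1 * n.+1)%N.
  by case: j j0 => // j _; rewrite mulSn.
ring.
Qed.

Lemma Qk_ev k : (Qk k).[1] = \prod_(j < k) (1 - 'X^(j.+1)).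
Proof.
rewrite /Qk; elim: k => [|k IH]; first by rewrite !big_ord0 hornerE.
by rewrite !big_ord_recr /= hornerM IH !hornerE.
Qed.

Lemma dL (c : P) : (1 - c%:P * 'X : B)^`() = - c%:P.
Proof. by rewrite derivB derivC sub0r deriv_mulC derivX mulr1. Qed.

Lemma dstep (Q : B) (c : P) :
  (Q * (1 - c%:P * 'X)).[1] = Q.[1] * (1 - c) /\
  (Q * (1 - c%:P * 'X))^`().[1] = Q^`().[1] * (1 - c) - Q.[1] * c /\
  (Q * (1 - c%:P * 'X))^`()^`().[1] = Q^`()^`().[1] * (1 - c) - 2%:R * c * Q^`().[1].
Proof.
have eL : (1 - c%:P * 'X : B).[1] = 1 - c by rewrite hornerD hornerN hornerC hornerM hornerC hornerX mulr1.
split; first by rewrite hornerM eL.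
split; first by rewrite derivM dL hornerD !hornerM eL hornerN hornerC mulrN.
rewrite derivM dL derivD !derivM dL derivN derivC oppr0 mulr0 addr0.
rewrite !hornerD !hornerM eL !hornerN !hornerC; ring.
Qed.

Lemma Qk_d k : eqm ((Qk k)^`().[1]) (- (Qk k).[1] * Ak k) /\
   eqm ((Qk k)^`()^`().[1]) ((Qk k).[1] * (Ak k ^+ 2 - A2k k)).
Proof.
elim: k => [|k [IH1 IH2]].
  rewrite /Qk /Ak /A2k !big_ord0 derivC deriv0 !hornerC; split; apply: eqm_eq; ring.
have ce := c_eq _ (ltn0Sn k).
rewrite /Qk big_ord_recr /= -/(Qk k) /Ak big_ord_recr /= -/(Ak k)
   /A2k big_ord_recr /= -/(A2k k).
have [e0 [e1 e2]] := dstep (Qk k) ('X^(k.+1)).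
rewrite e0 e1 e2.
set a := (Qk k).[1]; set b := (Qk k)^`().[1]; set g := (Qk k)^`()^`().[1].
set C := ('X^(k.+1) : P); set c := cj k.+1; set A := Ak k; set A2 := A2k k.
split.
  apply: eqm_trans (_ : eqm _ ((- a * A) * (1 - C) - a * ((1 - C) * c))) _.
    apply: eqmD; first by apply: eqmM IH1 (eqm_refl _).
    apply: eqmN; apply: eqmM (eqm_refl _) ce.
  apply: eqm_eq; ring.
apply: eqm_trans (_ : eqm _ ((a * (A ^+ 2 - A2)) * (1 - C)
     - 2%:R * ((1 - C) * c) * (- a * A))) _.
  apply: eqmD; first by apply: eqmM IH2 (eqm_refl _).
  apply: eqmN; apply: eqmM; last exact: IH1.
  by apply: eqmM (eqm_refl _) ce.
apply: eqm_eq; ring.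
Qed.


Definition Qinv : P := \prod_(j < n) \sum_(a < n.+1) ('X^(j.+1)) ^+ a.

Lemma Q0_inv : eqm ((Qk n).[1] * Qinv) 1.
Proof.
rewrite Qk_ev /Qinv -big_split /=.
have E1 : \prod_(j < n) (1:P) = 1 by rewrite big1_eq.
apply: eqm_trans (_ : eqm _ (\prod_(j < n) (1 : P))) (eqm_eq E1).
apply: (big_ind2 (fun x y => eqm x y)); [exact: eqm_refl | by move=> *; apply: eqmM |].
move=> j _; rewrite geom0; exists (- 'X^(j * n.+1)).
rewrite mulrN -exprM -exprD mulSn; ring.
Qed.

Lemma eqm_cancel x y : eqm ((Qk n).[1] * x) ((Qk n).[1] * y) -> eqm x y.
Proof.
move=> H.
have Hi := Q0_inv.
apply: eqm_trans (_ : eqm _ (Qinv * ((Qk n).[1] * x))) _.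
  apply: eqm_trans (eqm_eq (_ : x = 1 * x)) _; first by rewrite mul1r.
  apply: eqm_trans (eqmM (eqm_sym Hi) (eqm_refl x)) _.
  by apply: eqm_eq; ring.
apply: eqm_trans (eqmM (eqm_refl Qinv) H) _.
apply: eqm_trans (_ : eqm _ (((Qk n).[1] * Qinv) * y)) _.
  by apply: eqm_eq; ring.
apply: eqm_trans (eqmM Hi (eqm_refl y)) _.
by apply: eqm_eq; ring.
Qed.

Arguments eqm_cancel {x y}.
Lemma ht0 : ht 0 = (Qk n).[1].
Proof.
rewrite Qk_ev /ht expr0 mul1r /Rt; apply: eq_bigr => i _.
by rewrite /Ft leq0n addrC.
Qed.

Lemma main_alg : eqm ((Sk 0)^`().[1] + (Sk 0)^`()^`().[1])
   (Ak n + Ak n ^+ 2 + A2k n).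
Proof.
have X := eqmB_trans (Qk_S n) Sn_h0.
have E0 := eqmB_ev X.
have E1 := eqmB_ev (eqmB_deriv X).
have E2 := eqmB_ev (eqmB_deriv (eqmB_deriv X)).
move: E0 E1 E2.
rewrite !derivM !derivD !derivM derivC deriv0 !hornerD !hornerM !hornerC ht0.
have [D1 D2] := Qk_d n.
set a := (Qk n).[1]; set b := (Qk n)^`().[1]; set g := (Qk n)^`()^`().[1].
set s0 := (Sk 0).[1]; set s1 := (Sk 0)^`().[1]; set s2 := (Sk 0)^`()^`().[1].
move: D1 D2; rewrite -/a -/b -/g.
set A := Ak n; set A2 := A2k n => D1 D2 E0 E1 E2.
have s0e : eqm s0 1.
  by apply: eqm_cancel; rewrite mulr1.
have s1e : eqm s1 A.
  apply: eqm_cancel.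
  apply: eqm_trans (eqm_eq (_ : a * s1 = (b * s0 + a * s1) - b * s0)) _; first by rewrite /a; ring.
  apply: eqm_trans (eqmD E1 (eqmN (eqmM D1 s0e))) _.
  by apply: eqm_eq; rewrite /a /A /A2; ring.
have s2e : eqm s2 (A ^+ 2 + A2).
  apply: eqm_cancel.
  apply: eqm_trans (eqm_eq (_ : a * s2 =
     (g * s0 + b * s1 + (b * s1 + a * s2)) - g * s0 - 2%:R * b * s1)) _; first by rewrite /a; ring.
  apply: eqm_trans (eqmD (eqmD E2 (eqmN (eqmM D2 s0e)))
      (eqmN (eqmM (eqmM (eqm_refl _) D1) s1e))) _.
  by apply: eqm_eq; rewrite /a /A /A2; ring.
apply: eqm_trans (eqmD s1e s2e) _.
by apply: eqm_eq; rewrite /a /A /A2; ring.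
Qed.

End Main.



Section S1.
Variable n : nat.
Local Notation P := {poly int}.

Lemma D_S : (Sk n 0)^`().[1] + (Sk n 0)^`()^`().[1]
   = \sum_(t < n.+1) ht n t *+ (t * t).
Proof.
rewrite /Sk poly_def !raddf_sum /= !horner_sum -big_split /=.
apply: eq_bigr => t _.

rewrite mul0n expr0 mulr1 !derivZ derivXn derivMn derivXn !hornerZ !hornerMn !hornerXn !expr1n.
rewrite -[RHS]mulr_natr -mulrDr; congr (_ * _).
rewrite -[t.-1%:R *+ t]mulr_natr -natrM -natrD; congr (_%:R).
case: t => [[|t] ?] //=; lia.
Qed.


Lemma prodJ t (J : {set 'I_n}) :
  \prod_(i : 'I_n) (if i \in J then Ft n t i else 1) =
  if [forall i in J, (t <= i)%N] then (-1)^+#|J| * 'X^(\sum_(i in J) i.+1) else 0.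
Proof.
rewrite -big_mkcond /=; case: ifP => [/forallP H | /forallPn [i]].
  rewrite (eq_bigr (fun i : 'I_n => - 'X^(i.+1))); last first.
    by move=> i iJ; rewrite /Ft (implyP (H i) iJ).
  by rewrite prodrN prodrXr.
rewrite negb_imply => /andP [iJ ti].
by rewrite (bigD1 i) //= /Ft (negbTE ti) mul0r.
Qed.

Lemma coef_ht t : (ht n t)`_n = \sum_(J : {set 'I_n} | [forall i in J, (t <= i)%N])
   (-1)^+#|J| * ((t + \sum_(i in J) i.+1)%N == n)%:R.
Proof.
rewrite /ht /Rt bigA_distr mulr_sumr coef_sum [RHS]big_mkcond /=.
apply: eq_bigr => J _; rewrite prodJ; case: ifP => _; last by rewrite mulr0 coef0.
have E : ((-1)^+#|J| : P) = ((-1)^+#|J|)%:P by rewrite rmorph_sign.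
by rewrite E mulrCA coefCM -exprD coefXn eq_sym.
Qed.


Definition ismin (m : 'I_n) (A : {set 'I_n}) :=
  (m \in A) && [forall i in A, (m <= i)%N].

Lemma ismin_ex A : A != set0 -> exists m, ismin m A.
Proof.
case/set0Pn => i0 i0A.
case: (arg_minnP (fun i : 'I_n => nat_of_ord i) i0A) => m mA Hm.
exists m; apply/andP; split => //; apply/forallP => i; apply/implyP => iA.
exact: Hm.
Qed.

Lemma ismin_uniq m m' A : ismin m A -> ismin m' A -> m = m'.
Proof.
case/andP => mA /forallP H /andP [m'A /forallP H'].
apply: val_inj; apply/eqP; rewrite eqn_leq.
by rewrite (implyP (H m') m'A) (implyP (H' m) mA).
Qed.

Arguments ismin_uniq {m m' A}.

Lemma bigmin_le (s : seq 'I_n) (x : nat) m : m \in s ->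
  (\big[minn/x]_(i <- s) part i <= part m)%N.
Proof.
elim: s => [//|a s IH]; rewrite in_cons big_cons => /orP [/eqP -> | ms].
  exact: geq_minl.
exact: leq_trans (geq_minr _ _) (IH ms).
Qed.

Lemma spart_min m A : ismin m A -> spart A = m.+1.
Proof.
case/andP => mA /forallP H.
apply/eqP; rewrite eqn_leq; apply/andP; split.
  rewrite /spart -big_filter; apply: bigmin_le; by rewrite mem_filter mA mem_index_enum.
apply: (big_ind (fun x => m.+1 <= x)%N) => //.
- by rewrite ltnS; apply: ltnW.
- by move=> x y hx hy; rewrite leq_min hx hy.
- by move=> i iA; rewrite /part ltnS (implyP (H i) iA).
Qed.

Lemma sum_ismin (A : {set 'I_n}) (x : int) : A != set0 ->
  x = \sum_(m : 'I_n) (if ismin m A then x else 0).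
Proof.
move=> /ismin_ex [m0 H0].
rewrite (bigD1 m0) //= H0 big1 ?addr0 // => m ne.
case: ifP => // Hm; by rewrite (ismin_uniq Hm H0) eqxx in ne.
Qed.


Lemma ismin_U1 m J : (ismin m (m |: J) && ((m |: J) :\ m == J)) =
   [forall i in J, (m.+1 <= i)%N].
Proof.
apply/andP/forallP => [[/andP [_ /forallP H] /eqP E] i | H].
  apply/implyP => iJ.
  have : i \in m |: J by rewrite setU1r.
  move/(implyP (H i)); rewrite leq_eqVlt => /orP [/eqP e | //].
  have mi : m = i by apply: val_inj.
  by move: iJ; rewrite -mi -E setD11.
have mJ : m \notin J.
  by apply/negP => mJ; have := implyP (H m) mJ; rewrite ltnn.
split; last by rewrite setU1K.
rewrite /ismin setU11 /=; apply/forallP => i; apply/implyP.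
rewrite in_setU1 => /orP [/eqP -> // | iJ].
exact: ltnW (implyP (H i) iJ).
Qed.

Lemma LHS_eq : (0 < n)%N ->
  \sum_(A : {set 'I_n} | is_distinct_partition A)
     (-1) ^+ (nparts A).-1 * ((spart A) ^ 2)%:Z
  = \sum_(t < n.+1) (ht n t)`_n *+ (t * t).
Proof.
move=> n0.
rewrite big_ord_recl /= mulr0n add0r.
set g := fun A : {set 'I_n} => (-1) ^+ (nparts A).-1 * ((spart A) ^ 2)%:Z : int.
transitivity (\sum_(A : {set 'I_n}) \sum_(m : 'I_n)
    (if ismin m A && is_distinct_partition A then g A else 0)).
  rewrite big_mkcond; apply: eq_bigr => A _; case: ifP => H; last first.
    by rewrite big1 // => m _; rewrite andbF.
  have An : A != set0.
    apply/negP => /eqP A0; move: H; rewrite /is_distinct_partition A0 big_set0.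
    by rewrite eq_sym; case: n n0.
  transitivity (g A); first by [].
  rewrite {1}(sum_ismin A (g A) An); apply: eq_bigr => m _; by rewrite andbT.
rewrite exchange_big /=; apply: eq_bigr => m _.
rewrite coef_ht -big_mkcond.
rewrite (reindex_onto (fun J => m |: J) (fun A => A :\ m)) /=; last first.
  by move=> A /andP [/andP [mA _] _]; rewrite setD1K.
have bm : bump 0 m = m.+1 by [].
rewrite bm -sumrMnl [LHS]big_mkcond [RHS]big_mkcond /=; apply: eq_bigr => J _.
rewrite -andbA (andbC (is_distinct_partition _)) andbA ismin_U1.
case c : [forall i in J, (m < i)%N] => //=.
have := c; rewrite -ismin_U1 => /andP [imin /eqP E].
have mJ : m \notin J.
  by apply/negP => mJ; have := implyP ((forallP c) m) mJ; rewrite ltnn.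
rewrite /is_distinct_partition big_setU1 //= /g (spart_min _ _ imin) /nparts cardsU1 mJ /=.
case: eqP => _; last by rewrite mulr0 mul0rn.
by rewrite mulr1 -mulr_natr natz -mulnn.
Qed.

End S1.



Section S3.
Variable n : nat.
Local Notation P := {poly int}.

Definition cnt (j k : nat) : nat :=
  \sum_(a < n) \sum_(b < n) (j * a.+1 + k * b.+1 == n)%N.

Lemma coef_cj j m : (cj n j)`_m = (\sum_(a < n) (j * a.+1 == m)%N)%:R.
Proof.
rewrite /cj coef_sum natr_sum; apply: eq_bigr => a _.
by rewrite -exprM coefXn eq_sym.
Qed.

Lemma coef_cc j k : (cj n j * cj n k)`_n = (cnt j k)%:R.
Proof.
rewrite /cj /cnt mulr_suml coef_sum natr_sum; apply: eq_bigr => a _.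
rewrite mulr_sumr coef_sum natr_sum; apply: eq_bigr => b _.
by rewrite -!exprM -exprD coefXn eq_sym.
Qed.

Lemma coef_RHS : (Ak n n + Ak n n ^+ 2 + A2k n n)`_n =
  (\sum_(j < n) \sum_(a < n) (j.+1 * a.+1 == n)%N
   + \sum_(j < n) \sum_(k < n) cnt j.+1 k.+1 + \sum_(j < n) cnt j.+1 j.+1)%:R.
Proof.
rewrite !natrD !coefD; congr (_ + _ + _).
- rewrite /Ak coef_sum natr_sum; apply: eq_bigr => j _; exact: coef_cj.
- rewrite /Ak expr2 mulr_suml coef_sum natr_sum; apply: eq_bigr => j _.
  rewrite mulr_sumr coef_sum natr_sum; apply: eq_bigr => k _; exact: coef_cc.
- rewrite /A2k coef_sum natr_sum; apply: eq_bigr => j _; rewrite expr2; exact: coef_cc.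
Qed.


Local Open Scope nat_scope.
Lemma sum_div (F : nat -> nat) : (0 < n)%N ->
  (\sum_(d <- divisors n) F d = \sum_(j < n) (if j.+1 %| n then F j.+1 else 0))%N.
Proof.
move=> n0.
have pe : perm_eq (divisors n) [seq d <- iota 1 n | d %| n].
  apply: uniq_perm; first exact: divisors_uniq.
    by apply: filter_uniq; apply: iota_uniq.
  move=> d; rewrite mem_filter mem_iota -dvdn_divisors //.
  case dn: (d %| n) => //=.
  have d0 : (0 < d)%N by apply: dvdn_gt0 n0 dn.
  have := dvdn_leq n0 dn; lia.
rewrite (perm_big _ pe) big_filter.
have -> : iota 1 n = index_iota 1 n.+1 by rewrite /index_iota subn1.
by rewrite big_add1 big_mkord big_mkcond.
Qed.

Lemma divnn_inv d : (0 < n)%N -> d %| n -> (n %/ (n %/ d) = d)%N.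
Proof.
move=> n0 dn.
have d0 : (0 < d)%N by apply: dvdn_gt0 n0 dn.
have q0 : (0 < n %/ d)%N by rewrite divn_gt0 // dvdn_leq.
by rewrite -{1}(divnK dn) mulKn.
Qed.

Lemma sum_div_swap : (0 < n)%N ->
  (\sum_(d <- divisors n) n %/ d = \sum_(d <- divisors n) d)%N.
Proof.
move=> n0.
rewrite -(big_map (fun d => n %/ d) predT (fun x => x)).
apply: perm_big; apply: uniq_perm.
- rewrite map_inj_in_uniq; first exact: divisors_uniq.
  move=> d d' dD d'D E.
  rewrite -dvdn_divisors // in dD; rewrite -dvdn_divisors // in d'D.
  by rewrite -(divnn_inv _ n0 dD) E divnn_inv.
- exact: divisors_uniq.
move=> x; apply/mapP/idP => [[d dD ->] | xD].
  rewrite -dvdn_divisors // in dD; rewrite -dvdn_divisors //; exact: dvdn_div.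
exists (n %/ x); last by rewrite divnn_inv // dvdn_divisors.
by rewrite -dvdn_divisors // dvdn_div // dvdn_divisors.
Qed.


Lemma sum_lt (N m : nat) : \sum_(a < N) (a < m) = minn m N.
Proof.
elim: N => [|N IH]; first by rewrite big_ord0 minn0.
rewrite big_ord_recr /= IH; lia.
Qed.

Lemma sum_pt (x q : nat) : \sum_(b < n) (x + b.+1 == q) = (x < q <= x + n).
Proof.
case: (boolP (x < q <= x + n)) => H.
  have lt : q - x - 1 < n by lia.
  rewrite (bigD1 (Ordinal lt)) //= big1 => [|b /eqP ne].
    have -> : x + (q - x - 1).+1 == q by lia.
    by [].
  case: eqP => E //; exfalso; apply: ne; apply: val_inj => /=; lia.
rewrite big1 // => b _; case: eqP => E //; have := ltn_ord b; move: H E; lia.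
Qed.

Lemma eq_mul_div (c x q : nat) : 0 < c -> q * c = n -> (c * x == n) = (x == q).
Proof. by move=> c0 E; rewrite -E mulnC eqn_pmul2r. Qed.

Lemma inner1 j : 0 < n -> \sum_(a < n) (j.+1 * a.+1 == n) = (j.+1 %| n).
Proof.
move=> n0.
case: (boolP (j.+1 %| n)) => H; last first.
  rewrite big1 // => a _; case E: (j.+1 * a.+1 == n) => //.
  by move: H; rewrite -(eqP E) dvdn_mulr.
move: (divnK H); set q := n %/ j.+1 => E.
have -> : \sum_(a < n) (j.+1 * a.+1 == n) = \sum_(a < n) (0 + a.+1 == q).
  apply: eq_bigr => a _; by rewrite (eq_mul_div _ _ _ (ltn0Sn j) E).
rewrite sum_pt /=.
have qp : 0 < q by rewrite divn_gt0 // dvdn_leq.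
have qn : q <= n by exact: leq_div.
by rewrite qp add0n qn.
Qed.

Lemma claimD : 0 < n -> \sum_(j < n) \sum_(a < n) (j.+1 * a.+1 == n) = ndiv n.
Proof.
move=> n0; rewrite /ndiv -sum1_size sum_div //.
apply: eq_bigr => j _; rewrite inner1 //; by case: (j.+1 %| n).
Qed.

Lemma inner2 j : cnt j.+1 j.+1 = if j.+1 %| n then (n %/ j.+1).-1 else 0.
Proof.
rewrite /cnt; case: ifP => H; last first.
  rewrite big1 // => a _; rewrite big1 // => b _.
  case E: (j.+1 * a.+1 + j.+1 * b.+1 == n) => //.
  by move: H; rewrite -(eqP E) -mulnDr dvdn_mulr.
move: (divnK H); set q := n %/ j.+1 => E.
have qn : q <= n by exact: leq_div.
transitivity (\sum_(a < n) (a < q.-1)); last first.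
  by rewrite sum_lt; apply/minn_idPl; lia.
apply: eq_bigr => a _.
have -> : \sum_(b < n) (j.+1 * a.+1 + j.+1 * b.+1 == n) =
          \sum_(b < n) (a.+1 + b.+1 == q).
  apply: eq_bigr => b _; by rewrite -mulnDr (eq_mul_div _ _ _ (ltn0Sn j) E).
rewrite sum_pt; lia.
Qed.

Lemma claimS : 0 < n -> \sum_(j < n) cnt j.+1 j.+1 + ndiv n = sigma n.
Proof.
move=> n0; rewrite /sigma -sum_div_swap // sum_div // /ndiv -sum1_size sum_div //.
rewrite -big_split /=; apply: eq_bigr => j _; rewrite inner2.
case: ifP => // H.
have : 0 < n %/ j.+1 by rewrite divn_gt0 // dvdn_leq.
lia.
Qed.

Lemma pair_mem (S : {set 'I_n}) (j k : 'I_n) : #|S| = 2 -> k != j ->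
  (S == [set j; k]) = (j \in S) && (k \in S).
Proof.
move=> S2 kj; apply/idP/idP => [/eqP -> | /andP [jS kS]].
  by rewrite !inE !eqxx orbT.
rewrite eq_sym eqEcard subUset !sub1set jS kS /= cards2 S2 eq_sym kj.
by [].
Qed.

Lemma pairs (S : {set 'I_n}) :
  \sum_(j : 'I_n) \sum_(k : 'I_n | k != j) (S == [set j; k]) = 2 * (#|S| == 2).
Proof.
case: (boolP (#|S| == 2)) => H; last first.
  rewrite muln0 big1 // => j _; rewrite big1 // => k kj.
  case: eqP => // E; move: H; by rewrite E cards2 [j == k]eq_sym kj.
have S2 : #|S| = 2 by apply/eqP.
transitivity (\sum_(j in S) 1); last by rewrite sum1_card S2.
rewrite [RHS]big_mkcond; apply: eq_bigr => j _.
transitivity (\sum_(k : 'I_n | k != j) ((j \in S) && (k \in S) : nat)).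
  by apply: eq_bigr => k kj; rewrite pair_mem.
case jS: (j \in S) => /=; last by rewrite big1.
have : #|S :\ j| = 1.
  have := cardsD1 j S; rewrite jS S2 /= add1n => E; by case: E.
rewrite -sum1_card => <-; rewrite [RHS]big_mkcond [LHS]big_mkcond.
apply: eq_bigr => k _; rewrite !inE; by case: (k != j); case: (k \in S).
Qed.

Definition supp (f : {ffun 'I_n -> 'I_n.+1}) : {set 'I_n} :=
  [set i | nat_of_ord (f i) != 0%N].

Definition hf (j k : 'I_n) (p : 'I_n * 'I_n) : {ffun 'I_n -> 'I_n.+1} :=
  [ffun i => if i == j then inord p.1.+1 else if i == k then inord p.2.+1 else ord0].
Definition hf' (j k : 'I_n) (f : {ffun 'I_n -> 'I_n.+1}) : 'I_n * 'I_n :=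
  (insubd j (f j).-1, insubd j (f k).-1).

Lemma hf_val j k p i : k != j ->
  nat_of_ord (hf j k p i) = if i == j then p.1.+1 else if i == k then p.2.+1 else 0%N.
Proof.
move=> kj; rewrite /hf ffunE; case: (i == j); first by rewrite inordK // ltnS.
by case: (i == k); first by rewrite inordK // ltnS.
Qed.

Lemma fib (j k : 'I_n) : k != j ->
  \sum_(f : {ffun 'I_n -> 'I_n.+1}) (is_partition f && (supp f == [set j; k]))
  = cnt j.+1 k.+1.
Proof.
move=> kj.
transitivity (\sum_(f | is_partition f && (supp f == [set j; k])) 1).
  by rewrite [RHS]big_mkcond; apply: eq_bigr => f _; case: ifP.
rewrite (reindex_onto (hf j k) (hf' j k)); last first.
  move=> f /andP [_ /eqP Sf]; apply/ffunP => i.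
  have fnz : forall x, x \in [set j; k] -> (0 < f x)%N.
    by move=> x; rewrite -Sf inE lt0n.
  have fz : forall x, x \notin [set j; k] -> nat_of_ord (f x) = 0%N.
    by move=> x; rewrite -Sf inE negbK => /eqP.
  apply: val_inj => /=; rewrite hf_val // /hf' /=.
  case: eqP => [-> | /eqP ij].
    rewrite val_insubd; have := fnz j; rewrite !inE eqxx /= => /(_ isT) fj.
    have := ltn_ord (f j); rewrite ltnS => fjn.
    have -> : ((f j).-1 < n)%N by rewrite -ltnS prednK.
    by rewrite prednK.
  case: eqP => [-> | /eqP ik].
    rewrite val_insubd; have := fnz k; rewrite !inE eqxx orbT => /(_ isT) fk.
    have := ltn_ord (f k); rewrite ltnS => fkn.
    have -> : ((f k).-1 < n)%N by rewrite -ltnS prednK.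
    by rewrite prednK.
  by rewrite fz // !inE negb_or ij ik.
rewrite /cnt pair_big /= [LHS]big_mkcond /=; apply: eq_bigr => p _.
have -> : hf' j k (hf j k p) == p.
  apply/eqP; case: p => a b; rewrite /hf' /=.
  congr (_, _); apply: val_inj; rewrite val_insubd hf_val // ?eqxx //=.
    by rewrite ltn_ord.
  by rewrite (negbTE kj) /= ltn_ord.
have -> : supp (hf j k p) == [set j; k].
  apply/eqP/setP => i; rewrite !inE hf_val //.
  by case: (i == j) => //; case: (i == k).
rewrite !andbT /is_partition.
rewrite (bigD1 j) //= (bigD1 k) //= big1 => [|i /andP [ij ik]]; last first.
  by rewrite hf_val // (negbTE ij) (negbTE ik) muln0.
rewrite !hf_val // eqxx (negbTE kj) eqxx addn0 /part.
by case: (_ == _).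
Qed.


Lemma claimP : \sum_(j < n) \sum_(k < n) cnt j.+1 k.+1 =
   \sum_(j < n) cnt j.+1 j.+1 + 2 * p2 n.
Proof.
have E2 : 2 * p2 n = \sum_(j < n) \sum_(k < n | k != j) cnt j.+1 k.+1.
  transitivity (\sum_(j < n) \sum_(k < n | k != j)
     \sum_(f : {ffun 'I_n -> 'I_n.+1}) (is_partition f && (supp f == [set j; k]))); last first.
    by apply: eq_bigr => j _; apply: eq_bigr => k kj; rewrite fib.
  transitivity (\sum_(f : {ffun 'I_n -> 'I_n.+1}) is_partition f *
     \sum_(j < n) \sum_(k < n | k != j) (supp f == [set j; k])).
    rewrite /p2 -sum1_card big_mkcond big_distrr /=; apply: eq_bigr => f _.
    rewrite pairs inE /nsizes -/(supp f).
    by case: (is_partition f); case: (#|supp f| == 2).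
  transitivity (\sum_(f : {ffun 'I_n -> 'I_n.+1}) \sum_(j < n) \sum_(k < n | k != j)
     (is_partition f && (supp f == [set j; k]) : nat)).
    apply: eq_bigr => f _; rewrite big_distrr; apply: eq_bigr => j _.
    rewrite big_distrr; apply: eq_bigr => k _.
    by case: (is_partition f); rewrite /= ?mul1n ?mul0n.
  rewrite exchange_big; apply: eq_bigr => j _.
  by rewrite exchange_big.
rewrite E2 -big_split /=; apply: eq_bigr => j _.
by rewrite (bigD1 j) //=.
Qed.
Local Open Scope ring_scope.
End S3.



Theorem mainTheorem7 (n : nat) (hn : (0 < n)%N) :
  \sum_(A : {set 'I_n} | is_distinct_partition A)
     (-1) ^+ (nparts A).-1 * ((spart A) ^ 2)%:Z
  = (2 * sigma n)%:Z - (ndiv n)%:Z + (2 * p2 n)%:Z.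
Proof.
rewrite (LHS_eq n hn).
have -> : \sum_(t < n.+1) (ht n t)`_n *+ (t * t) =
     (\sum_(t < n.+1) ht n t *+ (t * t))`_n.
  by rewrite coef_sum; apply: eq_bigr => t _; rewrite coefMn.
rewrite -D_S (@eqm_coef n _ _ (main_alg n)) coef_RHS.
rewrite (claimD n hn) claimP -(claimS n hn).
set c := (\sum_(j < n) cnt n j.+1 j.+1)%N.
lia.
Qed.
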